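(* For any signature $\Sigma$, $r_{A_l(\Sigma)}=\pi_l\circ r_{A_p(\Sigma)}$ as maps $\mathbf N(T(\Sigma))\to\mathbb K\langle A_l(\Sigma)\rangle$.
   Context: $\mathbb K$ is a field of characteristic zero; $[P]$ is $1$ if $P$ holds, $0$ otherwise. A signature is a set $\Sigma$ with arity map $|\cdot|:\Sigma\to\mathbb N$. A $\Sigma$-term is the leaf $\bot$ or $s(t_1,\dots,t_n)$ with $s$ of arity $n$, $t_i$ terms; degree = number of internal nodes. A $\Sigma$-forest is a finite word of terms; reduced if no term is $\bot$. $\mathbf N(T(\Sigma))$ is the vector space with basis $E_f$, $f$ reduced forests. Internal nodes of a forest $f$ are numbered $1,\dots,\deg f$ by left-to-right preorder; $d_f(i)$ decoration; $i\to^f_j i'$ means $i'$ is the $j$-th child of $i$; roots are the roots of terms. A $\Sigma$-forest-like alphabet is a set $A$ with arbitrary subset $R^A$, subsets $D^A_s$ ($s\in\Sigma$), binary relations $\to^A_j$ ($j\ge1$). $\mathbb K\langle A\rangle$: noncommutative polynomials, possibly infinite support, bounded degree. $w\in A^*$ is $A$-compatible with $f$ if it has length $\deg f$, $w(i)\in R^A$ for roots $i$, $w(i)\in D^A_{d_f(i)}$ for all $i$, and $i\to^f_j i'\Rightarrow w(i)\to^A_j w(i')$; $r_A(E_f)=\sum_{w\in A^*}[w\ A\text{-compatible with }f]\,w$. $A_p(\Sigma)=\{a^s_u:s\in\Sigma,u\in\mathbb N^*\}$ with root relation $\{a^s_{0^\ell}:\ell\in\mathbb N\}$, $D_s=\{a^s_u:u\in\mathbb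 N^*\}$, $a^s_u\to_j a^{s'}_v$ iff $v=u\,j\,0^\ell$ for some $\ell\in\mathbb N$. $A_l(\Sigma)=\{a^s_\ell:s\in\Sigma,\ell\in\mathbb N\}$ with root relation all of $A_l(\Sigma)$, $D_s=\{a^s_\ell:\ell\in\mathbb N\}$, and $a^s_\ell\to_j a^{s'}_{\ell'}$ iff $\ell<\ell'$ (for every $j\ge1$). $\pi_l:\mathbb K\langle A_p(\Sigma)\rangle\to\mathbb K\langle A_l(\Sigma)\rangle$ is the linear map sending a word $a^{s_1}_{u_1}\cdots a^{s_n}_{u_n}$ to $a^{s_1}_{|u_1|}\cdots a^{s_n}_{|u_n|}$, where $|u|$ is the length of $u$. *)

(* Defs.v *)
From HB Require Import structures.
From mathcomp Require Import all_boot all_algebra.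
From mathcomp Require Import boolp.
Set Implicit Arguments. Unset Strict Implicit. Unset Printing Implicit Defensive.
Import GRing.Theory.
Local Open Scope ring_scope.

(* Sigma-terms: the leaf Bot or s(t_1,...,t_n).  Well-formedness
   (n = arity of s) is a separate predicate. *)
Inductive term (Sig : Type) := Bot | Node of Sig & seq (term Sig).
Arguments Bot {Sig}.

Fixpoint wf_term (Sig : Type) (ar : Sig -> nat) (t : term Sig) : bool :=
  match t with
  | Bot => true
  | Node s ts => (size ts == ar s) &&
      (fix aux (ts : seq (term Sig)) : bool :=
         match ts with [::] => true | t' :: ts' => wf_term ar t' && aux ts' end) ts
  end.

Definition forest (Sig : Type) := seq (term Sig).

Definition wf_forest (Sig : Type) (ar : Sig -> nat) (f : forest Sig) : bool :=
  all (wf_term ar) f.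

Definition is_bot (Sig : Type) (t : term Sig) : bool :=
  if t is Bot then true else false.

Definition reduced (Sig : Type) (f : forest Sig) : bool := ~~ has (@is_bot Sig) f.

(* Internal nodes of a term in left-to-right preorder, each given by its
   address (path) and its decoration.  The j-th child (j >= 1) of the node
   with address p has address rcons p j. *)
Fixpoint tnodes (Sig : Type) (t : term Sig) (p : seq nat) : seq (seq nat * Sig) :=
  match t with
  | Bot => [::]
  | Node s ts => (p, s) ::
      (fix aux (ts : seq (term Sig)) (j : nat) : seq (seq nat * Sig) :=
         match ts with
         | [::] => [::]
         | t' :: ts' => tnodes t' (rcons p j) ++ aux ts' j.+1
         end) ts 1%N
  end.

(* Internal nodes of a forest in left-to-right preorder; the root of the
   k-th term (0-based) has address [:: k].  The node numbered i (1-based in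
   the paper) is the entry of index i-1 of this list. *)
Definition fnodes (Sig : Type) (f : forest Sig) : seq (seq nat * Sig) :=
  flatten [seq tnodes (nth Bot f k) [:: k] | k <- iota 0 (size f)].

Definition fdeg (Sig : Type) (f : forest Sig) : nat := size (fnodes f).

Record alphabet (Sig : Type) := Alphabet {
  letter :> Type;
  rootA : letter -> Prop;
  decA : Sig -> letter -> Prop;
  edgeA : nat -> letter -> letter -> Prop
}.

(* Nodes are indexed 0..deg f - 1 here
   (node i of the paper is index i-1).  A node is a root iff its address
   has length 1; i ->^f_j i' iff address(i') = rcons (address i) j. *)
Definition compatible (Sig : Type) (A : alphabet Sig) (f : forest Sig)
    (w : seq A) : Prop :=
  let N := fnodes f in
  size w = size N /\
  (forall i a p s, onth w i = Some a -> onth N i = Some (p, s) ->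
     size p = 1%N -> rootA a) /\
  (forall i a p s, onth w i = Some a -> onth N i = Some (p, s) -> decA s a) /\
  (forall i i' j a a' p s p' s',
     onth w i = Some a -> onth N i = Some (p, s) ->
     onth w i' = Some a' -> onth N i' = Some (p', s') ->
     p' = rcons p j -> edgeA j a a').

(* K<A>: noncommutative series, represented by their coefficient function
   on words. *)
Definition ncpoly (K : fieldType) (A : Type) := seq A -> K.

Definition rA_basis (K : fieldType) (Sig : Type) (A : alphabet Sig)
   (f : forest Sig) : ncpoly K A :=
  fun w => if `[< @compatible Sig A f w >] then 1 else 0.

(* N(T(Sigma)): finite formal K-linear combinations of basis vectors E_f,
   f a reduced (well-formed) forest.  A vector is represented by a list of
   (coefficient, forest) pairs. *)
Definition NT_vec (K : fieldType) (Sig : Type) := seq (K * forest Sig).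

Definition NT_ok (K : fieldType) (Sig : Type) (ar : Sig -> nat)
   (x : NT_vec K Sig) : bool :=
  all (fun c => wf_forest ar c.2 && reduced c.2) x.

Definition rA (K : fieldType) (Sig : Type) (A : alphabet Sig)
   (x : NT_vec K Sig) : ncpoly K A :=
  fun w => \sum_(c <- x) c.1 * @rA_basis K Sig A c.2 w.

(* The alphabet A_p(Sigma): letters a^s_u = (s, u), u in N^* *)
Definition Ap (Sig : Type) : alphabet Sig :=
  @Alphabet Sig (Sig * seq nat)
    (fun a => exists l, a.2 = nseq l 0%N)
    (fun s a => a.1 = s)
    (fun j a b => exists l, b.2 = a.2 ++ j :: nseq l 0%N).

(* The alphabet A_l(Sigma): letters a^s_l = (s, l), l in N *)
Definition Al (Sig : Type) : alphabet Sig :=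
  @Alphabet Sig (Sig * nat)
    (fun _ => True)
    (fun s a => a.1 = s)
    (fun j a b => (a.2 < b.2)%N).

Definition pil_letter (Sig : Type) (a : Sig * seq nat) : Sig * nat :=
  (a.1, size a.2).
Definition pil_word (Sig : Type) (w : seq (Sig * seq nat)) : seq (Sig * nat) :=
  map (@pil_letter Sig) w.

(* For each
   target word v, the fibre {w | pi_l(w) = v, P w <> 0} must be finite and
   the coefficient of v in Q is the sum of the coefficients of P on it. *)
Definition is_pil (K : fieldType) (Sig : eqType)
   (P : ncpoly K (Sig * seq nat)) (Q : ncpoly K (Sig * nat)) : Prop :=
  forall v : seq (Sig * nat),
    exists s : seq (seq (Sig * seq nat)),
      uniq s /\
      (forall w, (w \in s) = (pil_word w == v) && (P w != 0)) /\
      Q v = \sum_(w <- s) P w.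

(* Main.v *)
Require Import Defs.
From mathcomp Require Import all_boot all_algebra.
From mathcomp Require Import boolp.
From mathcomp Require Import zify.
Set Implicit Arguments. Unset Strict Implicit. Unset Printing Implicit Defensive.

Section Struct.
Variable Sig : Type.

Definition term_ind2 (P : term Sig -> Prop) (HB : P Bot)
  (HN : forall s ts, foldr (fun t acc => P t /\ acc) True ts -> P (Node s ts)) :
  forall t, P t :=
  fix F t := match t with
  | Bot => HB
  | Node s ts => HN s ts ((fix G ts := match ts return foldr (fun t acc => P t /\ acc) True ts with
        | [::] => I | t :: ts' => conj (F t) (G ts') end) ts)
  end.

Fixpoint aux (p : seq nat) (ts : seq (term Sig)) (j : nat) : seq (seq nat * Sig) :=
  match ts with
  | [::] => [::]
  | t' :: ts' => tnodes t' (rcons p j) ++ aux p ts' j.+1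
  end.

Lemma tnodes_node s ts p : tnodes (Node s ts) p = (p, s) :: aux p ts 1.
Proof. rewrite /=; congr (_ :: _); elim: ts 1%N => //= t ts IH j; by rewrite IH. Qed.

Definition par_ok (A : seq (seq nat)) (i : nat) : Prop :=
  exists q j i0, i0 < i /\ onth A i = Some (rcons q j) /\ onth A i0 = Some q.

Definition G (B : seq nat -> Prop) (A : seq (seq nat)) :=
  uniq A /\ forall i a, onth A i = Some a -> B a \/ par_ok A i.

Lemma onth_size T (s : seq T) i x : onth s i = Some x -> i < size s.
Proof. elim: s i => [|y s IH] [|i] //= E; exact: IH E. Qed.

Lemma onth_lt T (s : seq T) i : i < size s -> exists x, onth s i = Some x.
Proof. elim: s i => [|y s IH] [|i] //=; [by exists y | exact: IH]. Qed.

Lemma G_mono B B' A : G B A ->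
  (forall i a, onth A i = Some a -> B a -> B' a \/ par_ok A i) -> G B' A.
Proof.
move=> [U H] H'; split => // i a E; case: (H i a E) => [/(H' i a E)|]; tauto.
Qed.

Lemma G_cat B1 B2 A1 A2 : G B1 A1 -> G B2 A2 ->
  (forall a, a \in A1 -> a \in A2 -> False) ->
  G (fun a => B1 a \/ B2 a) (A1 ++ A2).
Proof.
move=> [U1 H1] [U2 H2] D; split.
  rewrite cat_uniq U1 U2 /= andbT; apply/hasPn => a a2; apply/negP => a1.
  exact: (D a a1 a2).
move=> i a; rewrite onth_cat; case: ifP => Hi E.
  case: (H1 i a E); [tauto|] => [[q [j [i0 [lt [E1 E2]]]]]]; right.
  exists q, j, i0; rewrite !onth_cat Hi E1 (ltn_trans lt Hi) E2; done.
case: (H2 _ a E); [tauto|] => [[q [j [i0 [lt [E1 E2]]]]]]; right.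
exists q, j, (i0 + size A1); split; first by move: lt Hi; lia.
rewrite !onth_cat Hi E1; have -> : (i0 + size A1 < size A1) = false by lia.
by rewrite addnK.
Qed.

Lemma catIl (p r r' : seq nat) : p ++ r = p ++ r' -> r = r'.
Proof. by elim: p => //= x p IH [] /IH. Qed.

Lemma G_tnodes : forall (t : term Sig) (p : seq nat),
  G (fun a => a = p) (map fst (tnodes t p)) /\
  (forall a, a \in map fst (tnodes t p) -> exists r, a = p ++ r).
Proof.
elim/term_ind2 => [|s ts IHts] p.
  by split => //; split => // i a; rewrite onth0n.
rewrite tnodes_node /=.
have Haux : forall j, G (fun a => exists j', a = rcons p j') (map fst (aux p ts j)) /\
   (forall a, a \in map fst (aux p ts j) -> exists j' r, j <= j' /\ a = p ++ j' :: r).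
  elim: ts IHts => [|t ts IH] /= => [_ j|[IHt IHs] j].
    by split => //; split => // i a; rewrite onth0n.
  have [Gt Pt] := IHt (rcons p j); have [Ga Pa] := IH IHs j.+1.
  rewrite map_cat; split.
    apply: G_mono; first apply: (G_cat Gt Ga).
      move=> a /Pt [r ->] /Pa [j' [r' [lt]]]; rewrite cat_rcons => /catIl [E].
      by move: lt; rewrite E ltnn.
    by move=> i a _ [->|H]; left; [exists j|].
  move=> a; rewrite mem_cat => /orP [/Pt [r ->]|/Pa [j' [r' [lt ->]]]].
    by exists j, r; rewrite cat_rcons.
  by exists j', r'; split => //; apply: ltnW.
have [[U H] Pa] := Haux 1%N.
split; last first.
  move=> a; rewrite in_cons => /orP [/eqP ->|/Pa [j' [r [_ ->]]]]; first by exists [::]; rewrite cats0.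
  by exists (j' :: r).
split.
  rewrite /= U andbT; apply/negP => /Pa [j' [r [_]]] E.
  by have := congr1 size E; rewrite size_cat /=; lia.
move=> [|i] a /=; first by move=> [->]; left.
move=> E; case: (H i a E) => [[j' Ea]|[q [j [i0 [lt [E1 E2]]]]]]; right.
  by exists p, j', 0%N; rewrite -Ea.
by exists q, j, i0.+1.
Qed.

Definition FG (A : seq (seq nat)) :=
  uniq A /\ (forall a, a \in A -> 0 < size a) /\
  forall i a, onth A i = Some a -> size a = 1%N \/ par_ok A i.

Lemma FG_fnodes (f : forest Sig) : FG (map fst (fnodes f)).
Proof.
rewrite /fnodes.
have : forall m n, G (fun a => size a = 1%N)
   (map fst (flatten [seq tnodes (nth Bot f k) [:: k] | k <- iota m n])) /\
   (forall a, a \in map fst (flatten [seq tnodes (nth Bot f k) [:: k] | k <- iota m n]) ->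
     exists k r, m <= k /\ a = k :: r).
  move=> m n; elim: n m => [|n IH] m /=.
    by split => //; split => // i a; rewrite onth0n.
  have [Gt Pt] := G_tnodes (nth Bot f m) [:: m]; have [Ga Pa] := IH m.+1.
  rewrite map_cat; split.
    apply: G_mono; first apply: (G_cat Gt Ga).
      by move=> a /Pt [r ->] /Pa [k [r' [lt [E]]]]; move: lt; rewrite E ltnn.
    by move=> i a _ [->|H]; left.
  move=> a; rewrite mem_cat => /orP [/Pt [r ->]|/Pa [k [r' [lt ->]]]].
    by exists m, r.
  by exists k, r'; split => //; apply: ltnW.
move=> /(_ 0%N (size f)) [[U H] P]; split => //; split => // a /P [k [r [_ ->]]] //.
Qed.

End Struct.

Section Compat.
Variable Sig : Type.

Definition compatN (A : alphabet Sig) (N : seq (seq nat * Sig)) (w : seq A) : Prop :=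
  size w = size N /\
  (forall i a p s, onth w i = Some a -> onth N i = Some (p, s) ->
     size p = 1%N -> rootA a) /\
  (forall i a p s, onth w i = Some a -> onth N i = Some (p, s) -> decA s a) /\
  (forall i i' j a a' p s p' s',
     onth w i = Some a -> onth N i = Some (p, s) ->
     onth w i' = Some a' -> onth N i' = Some (p', s') ->
     p' = rcons p j -> edgeA j a a').
Arguments compatN : clear implicits.

Lemma compatE (A : alphabet Sig) f w : @compatible Sig A f w <-> compatN A (fnodes f) w.
Proof. by []. Qed.

Lemma onthA (N : seq (seq nat * Sig)) i p :
  onth (map fst N) i = Some p <-> exists s, onth N i = Some (p, s).
Proof.
rewrite onth_map; case: (onth N i) => [[p' s']|] /=; split => //.
- by move=> [<-]; exists s'.
- by move=> [s [-> _]].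
- by move=> [s].
Qed.

Lemma onth_pil (w : seq (Sig * seq nat)) i b :
  onth w i = Some b -> onth (pil_word w) i = Some (pil_letter b).
Proof. by rewrite /pil_word onth_map => ->. Qed.

Lemma onth_pil_inv (w : seq (Sig * seq nat)) i c :
  onth (pil_word w) i = Some c -> exists b, onth w i = Some b /\ c = pil_letter b.
Proof. by rewrite /pil_word onth_map; case: (onth w i) => //= b [<-]; exists b. Qed.

Lemma L1 N (w : seq (Sig * seq nat)) : compatN (Ap Sig) N w -> compatN (Al Sig) N (pil_word w).
Proof.
move=> [S [R [D E]]]; split; first by rewrite size_map.
split; first by [].
split.
  move=> i a p s /onth_pil_inv [b [Eb ->]] EN; exact: (D _ _ _ _ Eb EN).
move=> i i' j a a' p s p' s' /onth_pil_inv [b [Eb ->]] EN /onth_pil_inv [b' [Eb' ->]] EN' Ep.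
have [l El] := E _ _ _ _ _ _ _ _ _ Eb EN Eb' EN' Ep.
by rewrite /= El size_cat /=; lia.
Qed.

Lemma L2 N (w1 w2 : seq (Sig * seq nat)) :
  (forall i a, onth (map fst N) i = Some a -> size a = 1%N \/ par_ok (map fst N) i) ->
  compatN (Ap Sig) N w1 -> compatN (Ap Sig) N w2 -> pil_word w1 = pil_word w2 -> w1 = w2.
Proof.
move=> HN [S1 [R1 [D1 E1]]] [S2 [R2 [D2 E2]]] Ep.
apply: eq_from_onth; elim/ltn_ind => i IH.
case: (ltnP i (size N)) => Hi; last by rewrite !onth_default // ?S1 ?S2.
have [a1 Ea1] := onth_lt (leq_trans Hi (eq_leq (esym S1))).
have [a2 Ea2] := onth_lt (leq_trans Hi (eq_leq (esym S2))).
have [[p s] EN] := onth_lt Hi.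
have := onth_pil Ea1; rewrite Ep (onth_pil Ea2) => -[] e1 e2.
rewrite Ea1 Ea2; congr Some.
have Hp : exists p', onth (map fst N) i = Some p' by exists p; apply/onthA; exists s.
case: Hp => p' Hp'.
case: (HN i p' Hp') => [Hs|[q [j [i0 [lt [Eq Eq0]]]]]].
  have Ep' : p' = p by move: Hp'; rewrite onth_map EN => -[].
  subst p'.
  have [l1 El1] := R1 _ _ _ _ Ea1 EN Hs; have [l2 El2] := R2 _ _ _ _ Ea2 EN Hs.
  case: a1 a2 e1 e2 Ea1 Ea2 El1 El2 => [s1 u1] [s2 u2] /= -> e2 _ _ Eu1 Eu2.
  by move: e2; rewrite Eu1 Eu2 !size_nseq => ->.
have [[q' s0] EN0] := onth_lt (leq_trans (onth_size Eq0) (eq_leq (size_map _ N))).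
have Eq' : q' = q by move: Eq0; rewrite onth_map EN0 => -[].
subst q'.
have Ep' : p = rcons q j by move: Eq; rewrite onth_map EN => -[].
have [b Eb1] := onth_lt (leq_trans (onth_size Eq0) (leq_trans (eq_leq (size_map _ _)) (eq_leq (esym S1)))).
have Eb2 := IH _ lt; rewrite Eb1 in Eb2.
have [l1 El1] := E1 _ _ _ _ _ _ _ _ _ Eb1 EN0 Ea1 EN Ep'.
have [l2 El2] := E2 _ _ _ _ _ _ _ _ _ (esym Eb2) EN0 Ea2 EN Ep'.
case: a1 a2 e1 e2 Ea1 Ea2 El1 El2 => [s1 u1] [s2 u2] /= -> e2 _ _ Eu1 Eu2.
by move: e2; rewrite Eu1 Eu2 !size_cat /= !size_nseq => e; have -> : l1 = l2 by lia.
Qed.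
End Compat.

Lemma onth_rcons T (w : seq T) a i :
  onth (rcons w a) i = if i < size w then onth w i else if i == size w then Some a else None.
Proof.
elim: w i => [|x w IH] [|i] //=; rewrite ?onth0n // IH ltnS eqSS.
Qed.

Lemma onth_take T (v : seq T) n i : onth (take n v) i = if i < n then onth v i else None.
Proof.
elim: v n i => [|x v IH] [|n] [|i] //=; rewrite ?onth0n //; first by case: ifP.
by rewrite IH ltnS.
Qed.

Lemma take_onth T (v : seq T) n c : onth v n = Some c -> take n.+1 v = rcons (take n v) c.
Proof. elim: v n => [|x v IH] [|n] //= => [[->]|/IH ->] //; by case: v {IH}. Qed.

Arguments compatN {Sig} A N w.
Section Ex.
Variable Sig : Type.

Lemma L3 (N : seq (seq nat * Sig)) (v : seq (Sig * nat)) :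
  FG (map fst N) -> compatN (Al Sig) N v ->
  exists w, compatN (Ap Sig) N w /\ pil_word w = v.
Proof.
move=> [U [NE HN]] [Sv [_ [Dv Ev]]].
pose Inv n (w : seq (Sig * seq nat)) :=
  size w = n /\ pil_word w = take n v /\
  (forall i a p s, onth w i = Some a -> onth N i = Some (p, s) ->
     size p = 1%N -> @rootA _ (Ap Sig) a) /\
  (forall i a p s, onth w i = Some a -> onth N i = Some (p, s) -> @decA _ (Ap Sig) s a) /\
  (forall i i' j a a' p s p' s',
     onth w i = Some a -> onth N i = Some (p, s) ->
     onth w i' = Some a' -> onth N i' = Some (p', s') ->
     p' = rcons p j -> @edgeA _ (Ap Sig) j a a').
suff : forall n, n <= size N -> exists w, Inv n w.
  move=> /(_ _ (leqnn _)) [w [Sw [Pw [Rw [Dw Ew]]]]]; exists w; split.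
    by split.
  by rewrite Pw -Sv take_size.
elim => [_|n IH Hn].
  exists [::]; split; first by []. split; first by rewrite take0.
  split; [|split] => i; [move=> a p s'|move=> a p s'|move=> i' j a a' p s' p' s''] => E; by rewrite onth0n in E.
have [w [Sw [Pw [Rw [Dw Ew]]]]] := IH (ltnW Hn).
have [[p s] EN] := onth_lt Hn.
have [vn Evn] := onth_lt (leq_trans Hn (eq_leq (esym Sv))).
have Dvn : vn.1 = s := Dv _ _ _ _ Evn EN.
have HA : forall i q, onth (map fst N) i = Some q -> exists s', onth N i = Some (q, s').
  by move=> i q /onthA.
have HA' : forall i q s', onth N i = Some (q, s') -> onth (map fst N) i = Some q.
  by move=> i q s' E; apply/onthA; exists s'.
have Hmem : forall i q s', onth N i = Some (q, s') -> 0 < size q.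
  by move=> i q s' /HA' E; apply: NE; apply/onthP; exists i.
have Hwv : forall i b, onth w i = Some b -> onth v i = Some (pil_letter b).
  move=> i b Eb; have := onth_pil Eb; rewrite Pw onth_take.
  by case: ifP.
suff [u [Su [Ru Eu]]] : exists u : seq nat, size u = vn.2 /\
   (size p = 1%N -> exists l, u = nseq l 0%N) /\
   (forall i j b q s', onth w i = Some b -> onth N i = Some (q, s') -> p = rcons q j ->
      exists l, u = b.2 ++ j :: nseq l 0%N).
  exists (rcons w (vn.1, u)); split; first by rewrite size_rcons Sw.
  split.
    rewrite /pil_word map_rcons (take_onth Evn) -Pw /pil_letter /= Su.
    by case: vn {Evn Dvn Su}.
  have Ho : forall i a, onth (rcons w (vn.1, u)) i = Some a ->
      onth w i = Some a \/ (i = n /\ a = (vn.1, u)).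
    move=> i a; rewrite onth_rcons Sw; case: ifP => [_ ->|_]; first by left.
    by case: eqP => // -> [<-]; right.
  split.
    move=> i a p' s' /Ho [Ea E' Hs|[-> ->] E' Hs]; first exact: (Rw _ _ _ _ Ea E').
    by move: E'; rewrite EN => -[Ep _]; subst p'; apply: Ru.
  split.
    move=> i a p' s' /Ho [Ea E'|[-> ->] E']; first exact: (Dw _ _ _ _ Ea E').
    by move: E'; rewrite EN => -[_ <-] /=.
  move=> i i' j a a' p1 s1 p2 s2 /Ho [Ea E1|[-> ->] E1] /Ho [Ea' E2|[-> ->] E2] Ep.
  - exact: (Ew _ _ _ _ _ _ _ _ _ Ea E1 Ea' E2 Ep).
  - move: E2; rewrite EN => -[Ep2 _]; rewrite -Ep2 in Ep.
    exact: (Eu _ _ _ _ _ Ea E1 Ep).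
  - exfalso; move: E1; rewrite EN => -[Ep1 _]; subst p1.
    have lt : i' < n by rewrite -Sw; apply: onth_size Ea'.
    case: (HN i' p2 (HA' _ _ _ E2)) => [Hs|[q [j' [i0 [lt0 [Eq Eq0]]]]]].
      have := Hmem _ _ _ EN; move: Hs; rewrite Ep size_rcons; lia.
    have : rcons q j' = rcons p j.
      by rewrite -Ep; move: Eq; rewrite (HA' _ _ _ E2) => -[].
    move=> /rcons_inj [Eqp _]; subst q.
    have := @onth_inj _ _ n i0 U; rewrite size_map (HA' _ _ _ EN) Eq0.
    have -> : minn i0 n = i0 by lia.
    move=> /(_ (ltn_trans lt0 (ltn_trans lt Hn)) erefl); lia.
  - exfalso; move: E1 E2; rewrite EN => -[Ep1 _] [Ep2 _].
    by move: Ep; rewrite -Ep1 -Ep2 => /(congr1 size); rewrite size_rcons; lia.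
case: (eqVneq (size p) 1%N) => Hp.
  exists (nseq vn.2 0%N); split; first by rewrite size_nseq.
  split; first by move=> _; exists vn.2.
  move=> i j b q s' _ Eq Ep; have := Hmem _ _ _ Eq; move: Hp; rewrite Ep size_rcons; lia.
case: (HN n p (HA' _ _ _ EN)) => [Hs|[q [j [i0 [lt0 [Eq Eq0]]]]]].
  by move: Hp; rewrite Hs.
have Ep : p = rcons q j by move: Eq; rewrite (HA' _ _ _ EN) => -[].
have [s0 EN0] := HA _ _ Eq0.
have [b Eb] := onth_lt (leq_trans lt0 (eq_leq (esym Sw))).
have Evb := Hwv _ _ Eb.
have /= Hlt := Ev _ _ _ _ _ _ _ _ _ Evb EN0 Evn EN Ep.
exists (b.2 ++ j :: nseq (vn.2 - size b.2 - 1) 0%N); split.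
  by rewrite size_cat /= size_nseq; lia.
split; first by move=> Hs; move: Hp; rewrite Hs.
move=> i j' b' q' s' Eb' EN' Ep'.
have /rcons_inj [Eqq Ejj] : rcons q j = rcons q' j' by rewrite -Ep.
subst q' j'.
have Ei : i = i0.
  apply: (@onth_inj _ _ i i0 U); last by rewrite (HA' _ _ _ EN') Eq0.
  rewrite size_map; have := onth_size EN'; lia.
subst i; move: Eb'; rewrite Eb => -[<-]; by exists (vn.2 - size b.2 - 1).
Qed.
End Ex.
Import GRing.Theory.
Local Open Scope ring_scope.

Lemma has_map_mem (T : Type) (U : eqType) (g : T -> U) (a : pred T) s u :
  has a s -> (forall c, a c -> g c = u) -> u \in map g s.
Proof.
elim: s => //= c s IH /orP [Ha|Hs] H; rewrite in_cons; first by rewrite (H c Ha) eqxx.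
by rewrite IH ?orbT.
Qed.

Lemma In_map_mem (T : Type) (U : eqType) (g : T -> U) s c :
  List.In c s -> g c \in map g s.
Proof. elim: s => //= c' s IH [->|/IH H]; rewrite in_cons ?eqxx ?H ?orbT //. Qed.

Lemma eq_big_In (K : fieldType) (T : Type) (s : seq T) (F G : T -> K) :
  (forall c, List.In c s -> F c = G c) -> \sum_(c <- s) F c = \sum_(c <- s) G c.
Proof.
elim: s => [|c s IH] H; first by rewrite !big_nil.
rewrite !big_cons H /=; last by left.
by rewrite IH // => c' Hc; apply: H; right.
Qed.

Theorem proposition4p10 (K : fieldType) (hK : [pchar K]%R =i pred0)
    (Sig : eqType) (ar : Sig -> nat) (x : NT_vec K Sig) :
  NT_ok ar x ->
  is_pil (@rA K Sig (Ap Sig) x) (@rA K Sig (Al Sig) x).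
Proof.
move=> _ v.
pose W := seq (Sig * seq nat).
pose cAp (f : forest Sig) (w : W) := @compatible Sig (Ap Sig) f w.
pose cAl (f : forest Sig) (u : seq (Sig * nat)) := @compatible Sig (Al Sig) f u.
have uniqAp : forall f (w1 w2 : W), cAp f w1 -> cAp f w2 -> pil_word w1 = pil_word w2 -> w1 = w2.
  move=> f w1 w2 H1 H2; apply: (@L2 Sig (fnodes f)) H1 H2.
  by have [_ [_ H]] := FG_fnodes f.
have L1' : forall f (w : W), cAp f w -> cAl f (pil_word w).
  by move=> f w H; apply: (@L1 Sig (fnodes f)).
have L3' : forall f, cAl f v -> exists w : W, cAp f w /\ pil_word w = v.
  by move=> f H; apply: (@L3 Sig (fnodes f)) => //; apply: FG_fnodes.
pose cand (f : forest Sig) : W :=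
  match pselect (exists w : W, cAp f w /\ pil_word w = v) with
  | left H => proj1_sig (cid H) | right _ => [::] end.
have cand_spec : forall f, (exists w : W, cAp f w /\ pil_word w = v) ->
    cAp f (cand f) /\ pil_word (cand f) = v.
  move=> f H; rewrite /cand; case: pselect => // H'; exact: (proj2_sig (cid H')).
pose Pp := @rA K Sig (Ap Sig) x.
have bApE : forall f (w : W), @rA_basis K Sig (Ap Sig) f w = if `[< cAp f w >] then 1 else 0 by [].
pose U := undup [seq cand c.2 | c <- x].
exists [seq w <- U | (pil_word w == v) && (Pp w != 0)].
split; first by rewrite filter_uniq // undup_uniq.
split.
  move=> w; rewrite mem_filter; case E: ((pil_word w == v) && (Pp w != 0)) => //=.
  move/andP: E => [/eqP Ew Hw].
  rewrite mem_undup.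
  apply: (@has_map_mem _ _ (fun c : K * forest Sig => cand c.2) (fun c => `[< cAp c.2 w >])).
    apply: contraNT Hw => Hn; apply/eqP.
    rewrite /Pp /rA -[RHS](big_hasC 0 +%R (fun c => c.1 * @rA_basis K Sig (Ap Sig) c.2 w) Hn).
    rewrite [RHS]big_mkcond /=; apply: eq_bigr => c _.
    by rewrite bApE; case: asboolP => //; rewrite mulr0.
  move=> c /asboolP Hc /=.
  have [H1 H2] := cand_spec c.2 (ex_intro _ w (conj Hc Ew)).
  by apply: uniqAp H1 Hc _; rewrite Ew H2.
symmetry; rewrite big_filter.
transitivity (\sum_(w <- U | pil_word w == v) Pp w).
  rewrite [LHS]big_mkcond [RHS]big_mkcond; apply: eq_bigr => w _.
  by case: (pil_word w == v) => //=; case: eqP.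
rewrite /Pp /rA exchange_big /=; apply: eq_big_In => c cx.
rewrite -mulr_sumr; congr (_ * _).
rewrite /rA_basis -/(cAl c.2 v).
case: asboolP => HAl.
  have [H1 H2] := cand_spec c.2 (L3' _ HAl).
  have inU : cand c.2 \in [seq w <- U | pil_word w == v].
    by rewrite mem_filter H2 eqxx mem_undup; apply: (In_map_mem (fun c : K * forest Sig => cand c.2)).
  rewrite -big_filter (bigD1_seq _ inU) ?filter_uniq ?undup_uniq //=.
  rewrite asboolT //.
  rewrite big1_seq ?addr0 // => w; rewrite mem_filter => /andP [Hne /andP [/eqP Ew _]].
  case: asboolP => // Hw; exfalso; move/eqP: Hne; apply.
  by apply: uniqAp Hw H1 _; rewrite Ew H2.
rewrite big1 // => w /eqP Ew; case: asboolP => // Hw.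
by exfalso; apply: HAl; rewrite -Ew; apply: L1'.
Qed.
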